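(* Let $\mathcal M$ be a non-empty compact, locally connected Hausdorff space, $\vec\varphi:\mathcal M\to\mathbb R^k$ continuous, and $\vec x,\vec y\in\mathbb R^k$ with $x_i\le y_i$ for all $i$. Then $\lim_{\varepsilon\to0^+}\ell_{(\mathcal M,\vec\varphi)}(\vec x,(y_1+\varepsilon,\dots,y_k+\varepsilon))$ equals the number $L(\vec x,\vec y)\in\mathbb N\cup\{+\infty\}$ of equivalence classes of $\mathcal M\langle\vec\varphi\preceq\vec x\rangle$ with respect to the $\langle\vec\varphi\preceq\vec y\rangle$-connectedness relation.
   Context: For $\vec t\in\mathbb R^k$, $\mathcal M\langle\vec\varphi\preceq\vec t\rangle=\{P\in\mathcal M:\varphi_i(P)\le t_i\ \forall i\}$. $P,Q$ are $\langle\vec\varphi\preceq\vec t\rangle$-connected if a connected subset of $\mathcal M\langle\vec\varphi\preceq\vec t\rangle$ contains both. For $\vec x,\vec y$ with $x_i<y_i$ for all $i$, the size function $\ell_{(\mathcal M,\vec\varphi)}(\vec x,\vec y)$ is the number of equivalence classes of $\mathcal M\langle\vec\varphi\preceq\vec x\rangle$ under $\langle\vec\varphi\preceq\vec y\rangle$-connectedness. *)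

(* Defs.v *)
From HB Require Import structures.
From mathcomp Require Import all_boot all_order all_algebra.
From mathcomp Require Import finmap.
From mathcomp Require Import all_classical all_reals all_analysis.
Set Implicit Arguments. Unset Strict Implicit. Unset Printing Implicit Defensive.
Import Order.TTheory GRing.Theory Num.Theory.
Import numFieldNormedType.Exports.
Local Open Scope classical_set_scope.
Local Open Scope ring_scope.

(* R^k is modelled by row vectors 'rV[R]_k (product topology). *)

Definition locally_connected (M : topologicalType) : Prop :=
  forall (p : M) (U : set M), nbhs p U ->
    exists V : set M, [/\ open V, connected V, V p & V `<=` U].

Definition sublevel (R : realType) (M : topologicalType) (k : nat)
  (phi : M -> 'rV[R]_k) (t : 'rV[R]_k) : set M :=
  [set P | forall i : 'I_k, phi P ord0 i <= t ord0 i].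

Definition sub_connected (R : realType) (M : topologicalType) (k : nat)
  (phi : M -> 'rV[R]_k) (t : 'rV[R]_k) (P Q : M) : Prop :=
  exists C : set M, [/\ C `<=` sublevel phi t, connected C, C P & C Q].

Definition classes (R : realType) (M : topologicalType) (k : nat)
  (phi : M -> 'rV[R]_k) (x y : 'rV[R]_k) : set (set M) :=
  [set [set Q | sublevel phi x Q /\ sub_connected phi y P Q]
     | P in sublevel phi x].

Definition card_ext (R : realType) (T : choiceType) (A : set T) : \bar R :=
  (if pselect (finite_set A) then ((#|` fset_set A|)%fset%:R : R)%:E else +oo)%E.

(* number of equivalence classes; for x < y this is the size function l(x,y),
   in general it is L(x,y). *)
Definition nclasses (R : realType) (M : topologicalType) (k : nat)
  (phi : M -> 'rV[R]_k) (x y : 'rV[R]_k) : \bar R :=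
  card_ext R (classes phi x y).

Definition size_function (R : realType) (M : topologicalType) (k : nat)
  (phi : M -> 'rV[R]_k) (x y : 'rV[R]_k) : \bar R := nclasses phi x y.

(* Main.v *)
Require Import Defs.
From HB Require Import structures.
From mathcomp Require Import all_boot all_order all_algebra.
From mathcomp Require Import finmap.
From mathcomp Require Import all_classical all_reals all_analysis.
Import Order.TTheory GRing.Theory Num.Theory.
Import numFieldNormedType.Exports.
Local Open Scope classical_set_scope.
Local Open Scope ring_scope.
Set Implicit Arguments. Unset Strict Implicit. Unset Printing Implicit Defensive.
Lemma nested_connected (R : realType) (T : topologicalType) (C : R -> set T) :
  hausdorff_space T -> compact [set: T] ->
  (forall e, 0 < e -> closed (C e)) -> (forall e, 0 < e -> connected (C e)) ->
  (forall e e', 0 < e -> e <= e' -> C e `<=` C e') ->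
  connected (\bigcap_(e in [set e : R | 0 < e]) C e).
Proof.
move=> hT cT Ccl Ccn Cmono.
set I := \bigcap_(e in _) C e.
have Icl : closed I by apply: closed_bigI.
move=> B [b Bb] [Op oO BIO] [K cK BIK].
apply: contrapT => BnI.
have BI : B `<=` I by move=> w; rewrite BIO => -[].
have [z [Iz nBz]] : exists z, I z /\ ~ B z.
  apply: contrapT => H; apply: BnI; rewrite eqEsubset; split => // z Iz.
  by apply: contrapT => nB; apply: H; exists z.
have Bcl : closed B by rewrite BIK; exact: closedI.
have Dcl : closed (I `&` ~` Op) by apply: closedI => //; exact: open_closedC.
have disj : B `&` (I `&` ~` Op) = set0.
  by rewrite BIO -subset0 => w [[_ Opw] [_ nOw]].
have [U [V [oU oV BU DV UV0]]] :=
  (@normal_openP R T).1 (compact_normal hT cT) _ _ Bcl Dcl disj.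
have cover : I `<=` U `|` V.
  move=> w Iw; have [Opw|nOw] := pselect (Op w).
    by left; apply: BU; rewrite BIO.
  by right; apply: DV.
have [e e0 CeUV] : exists2 e, 0 < e & C e `<=` U `|` V.
  apply: contrapT => H.
  pose F := filter_from [set e : R | 0 < e] (fun e => C e `&` ~` (U `|` V)).
  have FF : Filter F.
    apply: filter_from_filter; first by exists 1 => /=; exact: ltr01.
    move=> i j /= i0 j0; exists (Order.min i j); first by rewrite /= lt_min i0 j0.
    move=> w [Cw nw]; split; split => //.
      by apply: (Cmono _ _ _ _ _ Cw); rewrite ?lt_min ?i0 // ge_min lexx.
    by apply: (Cmono _ _ _ _ _ Cw); rewrite ?lt_min ?i0 // ge_min lexx orbT.
  have PF : ProperFilter F.
    apply: filter_from_proper => i /= i0.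
    apply: contrapT => H2; apply: H; exists i => // w Cw.
    apply: contrapT => nw; apply: H2; by exists w.
  have [p [_ clp]] := cT F PF (filterT).
  move: clp; rewrite clusterE => clp.
  have Hp : forall i, 0 < i -> (C i `&` ~` (U `|` V)) p.
    move=> i i0.
    have : closed (C i `&` ~` (U `|` V)).
      by apply: closedI; [exact: Ccl|apply: open_closedC; exact: openU].
    move=> /closure_id ->; apply: clp; by exists i.
  have Ip : I p by move=> i i0; have [] := Hp i i0.
  by have [_] := Hp 1 ltr01; apply; apply: cover.
have IC : I `<=` C e by move=> w Iw; exact: Iw.
have CU : C e `&` U = C e.
  apply: (Ccn e e0).
  - by exists b; split; [exact/IC/BI|exact: BU].
  - by exists U.
  - exists (~` V); first exact: open_closedC.
    rewrite eqEsubset; split => w [Cw Hw]; split => //.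
      move=> Vw; have : (U `&` V) w by split.
      by rewrite UV0.
    by case: (CeUV _ Cw).
have Uz : U z by have [] : (C e `&` U) z by rewrite CU; exact: IC.
have Vz : V z.
  apply: DV; split => // Oz; apply: nBz; by rewrite BIO.
have : (U `&` V) z by split.
by rewrite UV0.
Qed.
Section Aux.
Variables (R : realType) (M : topologicalType) (k : nat) (phi : M -> 'rV[R]_k).

Lemma sublevel_mono (t t' : 'rV[R]_k) :
  (forall i, t ord0 i <= t' ord0 i) -> sublevel phi t `<=` sublevel phi t'.
Proof. by move=> tt' P HP i; apply: le_trans (HP i) (tt' i). Qed.

Lemma subc_mono (t t' : 'rV[R]_k) P Q :
  (forall i, t ord0 i <= t' ord0 i) -> sub_connected phi t P Q ->
  sub_connected phi t' P Q.
Proof.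
move=> tt' [C [Cs Cc CP CQ]]; exists C; split => //.
by move=> w /Cs; apply: sublevel_mono.
Qed.

Lemma subc_refl t P : sublevel phi t P -> sub_connected phi t P P.
Proof.
by move=> HP; exists [set P]; split => //; [move=> w -> | exact: connected1].
Qed.

Lemma subc_sym t P Q : sub_connected phi t P Q -> sub_connected phi t Q P.
Proof. by move=> [C [? ? ? ?]]; exists C. Qed.

Lemma subc_trans t P Q S : sub_connected phi t P Q -> sub_connected phi t Q S ->
  sub_connected phi t P S.
Proof.
move=> [C [Cs Cc CP CQ]] [D [Ds Dc DQ DS]]; exists (C `|` D); split.
- by move=> w [/Cs|/Ds].
- by apply: connectedU => //; exists Q.
- by left.
- by right.
Qed.

Lemma sublevel_closed t : continuous phi -> closed (sublevel phi t).
Proof.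
move=> cphi.
have -> : sublevel phi t = \bigcap_(i in [set: 'I_k])
   (phi @^-1` ((fun m : 'rV[R]_k => m ord0 i) @^-1` [set r | r <= t ord0 i])).
  by rewrite eqEsubset; split => P HP; [move=> i _; exact: HP | move=> i; exact: (HP i I)].
apply: closed_bigI => i _.
move/continuous_closedP : cphi; apply.
have /continuous_closedP := @coord_continuous R 1 k ord0 i; apply.
exact: closed_le.
Qed.


Lemma key_limit (x y : 'rV[R]_k) P Q :
  hausdorff_space M -> compact [set: M] -> continuous phi ->
  sublevel phi y P ->
  (forall e, 0 < e -> sub_connected phi (y + const_mx e) P Q) ->
  sub_connected phi y P Q.
Proof.
move=> hM cM cphi HP He.
have yle : forall e, 0 <= e -> forall i, y ord0 i <= (y + const_mx e) ord0 i.
  by move=> e e0 i; rewrite !mxE lerDl.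
have yle2 : forall e e', e <= e' -> forall i,
    (y + const_mx e) ord0 i <= (y + const_mx e') ord0 i.
  by move=> e e' ee' i; rewrite !mxE lerD2l.
pose C e := connected_component (sublevel phi (y + const_mx e)) P.
have HPe : forall e, 0 < e -> sublevel phi (y + const_mx e) P.
  by move=> e e0; apply: sublevel_mono HP; apply: yle; exact: ltW.
exists (\bigcap_(e in [set e : R | 0 < e]) C e); split.
- move=> w Iw i; apply/ler_addgt0Pr => e e0.
  have := connected_component_sub (Iw e e0) i.
  by rewrite !mxE.
- apply: nested_connected => //.
  + by move=> e e0; apply: component_closed; exact: sublevel_closed.
  + by move=> e e0; exact: component_connected.
  + move=> e e' e0 ee'; apply: connected_component_max.
    * by apply: connected_component_refl; apply: HPe.
    * move=> w Cw; exact: (sublevel_mono (yle2 _ _ ee') (connected_component_sub Cw)).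
    * exact: component_connected.
- by move=> e e0; apply: connected_component_refl; exact: HPe.
- move=> e e0; have [D [Ds Dc DP DQ]] := He e e0.
  exact: (connected_component_max DP Ds Dc).
Qed.

End Aux.


Local Open Scope ereal_scope.
Lemma card_ext_ge (R : realType) (T : choiceType) (A : set T) (B : {fset T}) :
  [set` B] `<=` A -> ((#|` B|)%:R : R)%:E <= card_ext R A.
Proof.
move=> BA; rewrite /card_ext; destruct pselect as [finA|nfin]; last exact: leey.
rewrite lee_fin ler_nat; apply: fsubset_leq_card.
apply/fsubsetP => t tB; rewrite in_fset_set // inE; exact: BA.
Qed.

Lemma card_ext_le (R : realType) (T U : choiceType) (A : set T) (B : set U)
  (f : U -> T) : finite_set B -> A `<=` f @` B ->
  card_ext R A <= ((#|` fset_set B|)%:R : R)%:E.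
Proof.
move=> finB ABf; rewrite /card_ext; destruct pselect as [finA|nfin]; last first.
  by exfalso; apply: nfin; apply: sub_finite_set ABf _; exact: finite_image.
rewrite lee_fin ler_nat.
have finI : finite_set (f @` B) by exact: finite_image.
apply: (@leq_trans #|` fset_set (f @` B)|).
  by apply: fsubset_leq_card; rewrite -fset_set_sub.
rewrite fset_set_image //; exact: leq_imfset_card.
Qed.

Local Close Scope ereal_scope.
Unset Implicit Arguments.
Theorem lemma5p2 (R : realType) (M : topologicalType) (k : nat)
  (phi : M -> 'rV[R]_k) (x y : 'rV[R]_k) :
  [set: M] !=set0 -> compact [set: M] -> locally_connected M ->
  hausdorff_space M -> continuous phi ->
  (forall i : 'I_k, x ord0 i <= y ord0 i) ->
  (fun e : R => size_function phi x (y + const_mx e)) @ 0^'+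
    --> nclasses phi x y.
Proof.
move=> [m0 _] cM lcM hM cphi xy.
set A := sublevel phi x.
pose ye e := y + const_mx e.
have yeE : forall e i, ye e ord0 i = y ord0 i + e by move=> e i; rewrite !mxE.
have xye : forall e, 0 <= e -> forall i, x ord0 i <= ye e ord0 i.
  by move=> e e0 i; rewrite yeE; apply: le_trans (xy i) _; rewrite lerDl.
pose cls t P := [set Q | A Q /\ sub_connected phi t P Q].
have cls_eq : forall t P Q, sub_connected phi t P Q -> cls t P = cls t Q.
  move=> t P Q PQ; rewrite eqEsubset; split => Z [AZ HZ]; split => //.
    exact: subc_trans (subc_sym PQ) HZ.
  exact: subc_trans PQ HZ.
have cls_rel : forall (t : 'rV[R]_k) (P Q : M), (forall i, x ord0 i <= t ord0 i) -> A Q ->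
    cls t P = cls t Q -> sub_connected phi t P Q.
  move=> t P Q xt AQ e.
  have : cls t Q Q by split => //; apply: subc_refl; exact: (sublevel_mono xt AQ).
  by rewrite -e => -[].
have /choice [rep Hrep] : forall c : set M, exists P,
    classes phi x y c -> A P /\ cls y P = c.
  move=> c; have [[P AP <-]|nc] := pselect (classes phi x y c).
    by exists P.
  by exists m0.
have upper : forall e, 0 < e -> classes phi x (ye e) `<=`
    (fun c => cls (ye e) (rep c)) @` classes phi x y.
  move=> e e0 _ [P AP <-].
  have cP : classes phi x y (cls y P) by exists P.
  exists (cls y P) => //.
  have [Ar Er] := Hrep _ cP.
  apply: cls_eq; apply: subc_mono (cls_rel _ _ _ xy AP Er).
  by move=> i; rewrite yeE lerDl ltW.
have lower : forall S : {fset set M}, [set` S] `<=` classes phi x y ->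
    \forall e \near 0^'+, (((#|` S|)%:R : R)%:E <= nclasses phi x (ye e))%E.
  move=> S SC.
  have sep : forall c c', c \in S -> c' \in S -> c != c' ->
      \forall e \near 0^'+, ~ sub_connected phi (ye e) (rep c) (rep c').
    move=> c c' cS c'S cc'.
    have [Ac Ec] := Hrep _ (SC _ cS); have [Ac' Ec'] := Hrep _ (SC _ c'S).
    have nrel : ~ sub_connected phi y (rep c) (rep c').
      move=> H; move/negP: cc'; apply; apply/eqP; rewrite -Ec -Ec'; exact: cls_eq.
    have [e0 e0p ne0] : exists2 e0, 0 < e0 &
        ~ sub_connected phi (ye e0) (rep c) (rep c').
      apply: contrapT => H; apply: nrel; apply: key_limit => //.
        exact: (sublevel_mono xy Ac).
      move=> e e0; apply: contrapT => H2; apply: H; by exists e.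
    near=> e => H; apply: ne0; apply: subc_mono H => i; rewrite !yeE lerD2l.
    near: e; exact: nbhs_right_ltW e0p.
  have H1 : forall c, c \in S -> \forall e \near 0^'+,
      forall c', c' \in S -> c != c' -> ~ sub_connected phi (ye e) (rep c) (rep c').
    move=> c cS.
    have Hi : forall c', c' \in S -> (0:R)^'+ [set e : R | c' \in S -> c != c' ->
       ~ sub_connected phi (ye e) (rep c) (rep c')].
      move=> c' c'S; have [<-|cc'] := eqVneq c c'.
        by apply: filterS filterT => e _ /=.
      by apply: filterS (sep c c' cS c'S cc') => e He _ _.
    have := @filter_bigI R (set M) S _ _ (at_right_proper_filter (0:R)) Hi.
    apply: filterS => e He d dS cd; exact: (He d dS dS cd).
  have allsep : \forall e \near 0^'+, forall c c', c \in S -> c' \in S -> c != c' ->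
      ~ sub_connected phi (ye e) (rep c) (rep c').
    have := @filter_bigI R (set M) S _ _ (at_right_proper_filter (0:R)) H1.
    apply: filterS => e He c c' cS c'S cc'; exact: He c cS c' c'S cc'.
  apply: filterS (filterI (nbhs_right_gt (0:R)) allsep) => e [e0 allsepe].
  apply: (le_trans _ (@card_ext_ge R _ _ [fset cls (ye e) (rep c) | c in S]%fset _)).
    have inj : {in S &, injective (fun c => cls (ye e) (rep c))}.
      move=> c c' cS c'S /= Ecc; apply/eqP; apply: contraT => cc'; exfalso.
      apply: (allsepe c c' cS c'S cc').
      apply: cls_rel Ecc; first exact: xye (ltW e0).
      exact: (Hrep _ (SC _ c'S)).1.
      by move/card_in_imfsetP: inj => /eqP ->.
  move=> _ /imfsetP [c cS ->]; exists (rep c) => //.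
  exact: (Hrep _ (SC _ cS)).1.
have [fin|inf] := pselect (finite_set (classes phi x y)).
  have NE : nclasses phi x y = ((#|` fset_set (classes phi x y)|)%:R : R)%:E.
    by rewrite /nclasses /card_ext; destruct pselect.
  rewrite NE; apply: cvg_near_cst.
  have low2 : \forall e \near 0^'+, (((#|` fset_set (classes phi x y)|)%:R : R)%:E <= nclasses phi x (ye e))%E.
    apply: lower => c /=; rewrite in_fset_set // inE; exact.
  apply: filterS (filterI (nbhs_right_gt (0:R)) low2) => e [e0 He].
  apply: le_anti; rewrite He andbT.
  exact: card_ext_le fin (upper e e0).
have NE : nclasses phi x y = (+oo)%E.
  by rewrite /nclasses /card_ext; destruct pselect.
rewrite NE; apply/cvgeyPge => r.
have [S SC Sn] := infinite_set_fset (Num.truncn r).+1 inf.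
apply: filterS (lower S SC) => e He.
apply: le_trans He; rewrite lee_fin.
apply: le_trans (ltW (truncnS_gt r)) _; rewrite ler_nat; exact: Sn.
Unshelve. all: by end_near.
Qed.
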